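(* Let $d\ge 1$ and let $\Phi_1,\dots,\Phi_N:\mathcal L(\mathbb C^d)\to\mathcal L(\mathbb C^d)$ be quantum channels. Suppose there exist orthonormal bases $\mathbf e^{(1)},\dots,\mathbf e^{(N)}$ of $\mathbb C^d$ such that the value of the semidefinite program $$\min\Big\{\operatorname{Tr} H \;:\; H \text{ Hermitian on } \mathbb C^d\otimes\mathbb C^d,\ H\ge G_{\Phi_i,\mathbf e^{(i)}}\ \text{for all } i\in[N]\Big\}$$ is strictly larger than $d$. Then the $N$-tuple $(\Phi_1,\dots,\Phi_N)$ is incompatible.
   Context: A quantum channel is a completely positive trace-preserving linear map; $\Phi^*$ denotes its adjoint with respect to the Hilbert–Schmidt inner product $\langle X,Y\rangle=\operatorname{Tr}(X^*Y)$. Channels $\Phi_1,\dots,\Phi_N:\mathcal L(\mathbb C^d)\to\mathcal L(\mathbb C^d)$ are compatible if there is a channel $\Lambda:\mathcal L(\mathbb C^d)\to\mathcal L((\mathbb C^d)^{\otimes N})$ whose marginals are the $\Phi_i$, i.e. $\Phi_i(X)$ equals the partial trace of $\Lambda(X)$ over all tensor factors except the $i$-th, for every $X$; otherwise they are incompatible. For an operator $X=\sum_{i,j}X_{ij}|i\rangle\langle j|$ on $\mathbb C^d$, let $|X\rangle:=\sum_{i,j}X_{ij}|i\rangle\otimes|j\rangle\in\mathbb C^d\otimes\mathbb C^d$. For a channel $\Phi$ on $\mathcal L(\mathbb C^d)$ and an orthonormal basis $\mathbf e=(e_i)_{i=1}^d$, define $$G_{\Phi,\mathbf e}:=\sum_{i=1}^d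 \frac{|\Phi^*(|e_i\rangle\langle e_i|)\rangle\langle\Phi^*(|e_i\rangle\langle e_i|)|}{\operatorname{Tr}\Phi^*(|e_i\rangle\langle e_i|)},$$ where terms with zero denominator are omitted. $H\ge G$ is the positive semidefinite order. *)

(* Defs.v *)
From HB Require Import structures.
From mathcomp Require Import all_boot all_order all_algebra.
From mathcomp Require Import complex.
From mathcomp Require Import reals.
Set Implicit Arguments. Unset Strict Implicit. Unset Printing Implicit Defensive.
Import Order.TTheory GRing.Theory Num.Theory.
Local Open Scope ring_scope.

Section Quantum.
Variable C : numClosedFieldType.

(* An operator on the Hilbert space with orthonormal (computational) basis
   indexed by the finite type I, given by its matrix entries <p|X|q>. *)
Definition op (I : finType) := I -> I -> C.

(* Positive semidefinite: <v, A v> >= 0 for every vector v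
   (0 <= z in a numClosedField means z is real and nonnegative). *)
Definition psd (I : finType) (A : op I) : Prop :=
  forall v : I -> C, 0 <= \sum_(p : I) \sum_(q : I) (v p)^* * A p q * v q.

Definition hermitian_op (I : finType) (A : op I) : Prop :=
  forall p q : I, A q p = (A p q)^*.

Definition trace (I : finType) (A : op I) : C := \sum_(p : I) A p p.

Definition hs (I : finType) (X Y : op I) : C :=
  \sum_(p : I) \sum_(q : I) (X p q)^* * Y p q.

Definition unit_op (I : finType) (i j : I) : op I :=
  fun p q => ((p == i) && (q == j))%:R.

Definition linear_map (I J : finType) (Phi : op I -> op J) : Prop :=
  forall (a : C) (X Y : op I),
    Phi (fun p q => a * X p q + Y p q) = (fun p q => a * Phi X p q + Phi Y p q).

Definition trace_preserving (I J : finType) (Phi : op I -> op J) : Prop :=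
  forall X : op I, trace (Phi X) = trace X.

(* Completely positive: id_k (x) Phi is positive for every k.
   An operator Y on C^k (x) H_I has entries Y (a,p) (c,q); its (a,c) block is
   fun p q => Y (a,p) (c,q), and (id_k (x) Phi)(Y) has (a,c) block Phi(block). *)
Definition completely_positive (I J : finType) (Phi : op I -> op J) : Prop :=
  forall (k : nat) (Y : op ('I_k * I)%type), psd Y ->
    psd (fun (x y : ('I_k * J)%type) =>
           Phi (fun p q => Y (x.1, p) (y.1, q)) x.2 y.2).

Definition channel (I J : finType) (Phi : op I -> op J) : Prop :=
  [/\ linear_map Phi, completely_positive Phi & trace_preserving Phi].

(* Adjoint w.r.t. the Hilbert-Schmidt inner product:
   <X, Phi^*(Y)> = <Phi(X), Y>; evaluated on matrix units,
   Phi^*(Y) p q = <E_pq, Phi^*(Y)> = <Phi(E_pq), Y>. *)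
Definition adjoint (I J : finType) (Phi : op I -> op J) (Y : op J) : op I :=
  fun p q => hs (Phi (unit_op p q)) Y.

Definition orthonormal_basis (d : nat) (e : 'I_d -> 'I_d -> C) : Prop :=
  forall i j : 'I_d, \sum_(p < d) (e i p)^* * e j p = (i == j)%:R.

Definition proj_op (d : nat) (v : 'I_d -> C) : op 'I_d :=
  fun p q => v p * (v q)^*.

(* |X><X| on C^d (x) C^d where |X> = sum_{ij} X_ij |i> (x) |j>. *)
Definition vec_outer (d : nat) (X : op 'I_d) : op ('I_d * 'I_d)%type :=
  fun x y => X x.1 x.2 * (X y.1 y.2)^*.

(* G_{Phi,e}: terms with zero denominator are omitted. *)
Definition G_op (d : nat) (Phi : op 'I_d -> op 'I_d) (e : 'I_d -> 'I_d -> C)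
  : op ('I_d * 'I_d)%type :=
  fun x y => \sum_(i < d | trace (adjoint Phi (proj_op (e i))) != 0)
     vec_outer (adjoint Phi (proj_op (e i))) x y
       / trace (adjoint Phi (proj_op (e i))).

Definition op_ge (I : finType) (H G : op I) : Prop := psd (fun p q => H p q - G p q).

(* Partial trace of an operator on (C^d)^{(x) N} (basis indexed by
   x : {ffun 'I_N -> 'I_d}) over all tensor factors except the i-th. *)
Definition ptrace_keep (d N : nat) (i : 'I_N) (A : op {ffun 'I_N -> 'I_d})
  : op 'I_d :=
  fun a b => \sum_(x : {ffun 'I_N -> 'I_d} | x i == a)
             \sum_(y : {ffun 'I_N -> 'I_d} | (y i == b) && [forall j, (j != i) ==> (x j == y j)])
               A x y.

Definition compatible (d N : nat) (Phi : 'I_N -> op 'I_d -> op 'I_d) : Prop :=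
  exists Lambda : op 'I_d -> op {ffun 'I_N -> 'I_d},
    channel Lambda /\
    forall (i : 'I_N) (X : op 'I_d), ptrace_keep i (Lambda X) = Phi i X.

End Quantum.

(* Main.v *)
Require Import Defs.
From HB Require Import structures.
From mathcomp Require Import all_boot all_order all_algebra.
From mathcomp Require Import complex.
From mathcomp Require Import reals.
From mathcomp Require Import ring.
From Stdlib Require Import FunctionalExtensionality.
Set Implicit Arguments. Unset Strict Implicit. Unset Printing Implicit Defensive.
Import Order.TTheory GRing.Theory Num.Theory.
Local Open Scope ring_scope.


Section Gen.
Variable C : numClosedFieldType.

Definition Bf (I : finType) (A : op C I) (u w : I -> C) : C :=
  \sum_(p : I) \sum_(q : I) (u p)^* * A p q * w q.

Lemma psdB (I : finType) (A : op C I) u : psd A -> 0 <= Bf A u u.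
Proof. by move=> h; apply: h. Qed.

Lemma Bf_addl (I : finType) (A : op C I) (a : C) u1 u2 w :
  Bf A (fun x => a * u1 x + u2 x) w = a^* * Bf A u1 w + Bf A u2 w.
Proof.
rewrite /Bf mulr_sumr -big_split /=; apply: eq_bigr => p _.
rewrite mulr_sumr -big_split /=; apply: eq_bigr => q _.
rewrite rmorphD rmorphM /=; ring.
Qed.

Lemma Bf_addr (I : finType) (A : op C I) (a : C) u w1 w2 :
  Bf A u (fun x => a * w1 x + w2 x) = a * Bf A u w1 + Bf A u w2.
Proof.
rewrite /Bf mulr_sumr -big_split /=; apply: eq_bigr => p _.
rewrite mulr_sumr -big_split /=; apply: eq_bigr => q _.
ring.
Qed.

Lemma real_of_ge0 (x : C) : 0 <= x -> x^* = x.
Proof. by move=> h; apply: conj_Creal; apply: ger0_real. Qed.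

Lemma psd_herm (I : finType) (A : op C I) u w :
  psd A -> Bf A w u = (Bf A u w)^*.
Proof.
move=> hA.
set a := Bf A u u; set c := Bf A w w; set b := Bf A u w; set b' := Bf A w u.
have h1 := psdB (fun x => 1 * u x + w x) hA.
have h2 := psdB (fun x => 'i * u x + w x) hA.
rewrite Bf_addl !Bf_addr -/a -/b -/b' -/c in h1.
rewrite Bf_addl !Bf_addr -/a -/b -/b' -/c in h2.
have ea : a^* = a by apply: real_of_ge0; apply: psdB.
have ec : c^* = c by apply: real_of_ge0; apply: psdB.
move/real_of_ge0: h1; move/real_of_ge0: h2.
rewrite ?(rmorphD, rmorphM, rmorphN) /= ?(conjCK, rmorph1, conjCi, ea, ec) => h2 h1.
move/eqP: h1; rewrite -subr_eq0 => /eqP h1.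
move/eqP: h2; rewrite -subr_eq0 => /eqP h2.
have e1 : b^* + b'^* - b - b' = 0 by rewrite -h1; ring.
have e2 : 'i * (b^* - b'^* + b - b') = 0 by rewrite -h2; ring.
move/eqP: e2; rewrite mulf_eq0 (negPf (neq0Ci C)) /= => /eqP e2.
have : b'^* - b = 0.
  have h2n : (2 : C) != 0 by rewrite pnatr_eq0.
  rewrite (_ : b'^* - b = (b^* + b'^* - b - b' - (b^* - b'^* + b - b')) / 2).
    by rewrite e1 e2 subrr mul0r.
  by field.
by move/eqP; rewrite subr_eq0 => /eqP <-; rewrite conjCK.
Qed.

Lemma Bf_comb (I : finType) (A : op C I) (s t : C) u w :
  Bf A (fun x => s * u x + t * w x) (fun x => s * u x + t * w x) =
  s^* * s * Bf A u u + s^* * t * Bf A u w + t^* * s * Bf A w u + t^* * t * Bf A w w.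
Proof.
rewrite /Bf !mulr_sumr -!big_split /=; apply: eq_bigr => p _.
rewrite !mulr_sumr -!big_split /=; apply: eq_bigr => q _.
rewrite rmorphD !rmorphM /=; ring.
Qed.

Lemma psd_CS (I : finType) (A : op C I) u w : psd A ->
  Bf A u w * (Bf A u w)^* <= Bf A u u * Bf A w w.
Proof.
move=> hA.
have ha := psdB u hA; have hc := psdB w hA.
have hb' := psd_herm u w hA.
set a := Bf A u u in ha *; set c := Bf A w w in hc *; set b := Bf A u w in hb' *.
have ea : a^* = a by apply: real_of_ge0.
have ec : c^* = c by apply: real_of_ge0.
move: hc; rewrite le0r => /orP [/eqP c0 | cpos].
  have h := psdB (fun x => (a + 1) * w x + (- b) * u x) hA.
  rewrite Bf_comb -/a -/b -/c c0 psd_herm // -/b in h.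
  rewrite !(rmorphD, rmorphN, rmorph1) /= ea in h.
  have : 0 <= (a + 2) * (- (b * b^*)).
    by move: h; congr (_ <= _); ring.
  rewrite pmulr_rge0; last by apply: (@lt_le_trans _ _ 2); [ | rewrite lerDr].
  by rewrite oppr_ge0 c0 mulr0.
have h := psdB (fun x => c * u x + (- b^*) * w x) hA.
rewrite Bf_comb -/a -/b -/c hb' in h.
rewrite !(rmorphD, rmorphN, rmorph1) /= ec conjCK in h.
have : 0 <= c * (c * a - b * b^*) by move: h; congr (_ <= _); ring.
by rewrite pmulr_rge0 // subr_ge0 (mulrC a).
Qed.

Lemma sum_dl (I : finType) (p : I) (f : I -> C) : \sum_x (x == p)%:R * f x = f p.
Proof.
rewrite (bigD1 p) //= eqxx mul1r big1 ?addr0 // => x /negPf ->; by rewrite mul0r.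
Qed.
Lemma sum_dr (I : finType) (p : I) (f : I -> C) : \sum_x f x * (x == p)%:R = f p.
Proof. by rewrite -[RHS](sum_dl p); apply: eq_bigr => x _; rewrite mulrC. Qed.

Definition dv (I : finType) (p : I) : I -> C := fun x => (x == p)%:R.

Lemma Bf_dv (I : finType) (A : op C I) p q : Bf A (dv p) (dv q) = A p q.
Proof.
rewrite /Bf /dv -[RHS](sum_dl p (fun x => A x q)); apply: eq_bigr => x _.
rewrite rmorph_nat -(sum_dr q (A x)) mulr_sumr; apply: eq_bigr => y _; by rewrite mulrA.
Qed.

Lemma psd_diag (I : finType) (A : op C I) p : psd A -> 0 <= A p p.
Proof. by move=> h; rewrite -Bf_dv; apply: psdB. Qed.

Lemma psd_hermE (I : finType) (A : op C I) p q : psd A -> A q p = (A p q)^*.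
Proof. by move=> h; rewrite -!Bf_dv; apply: psd_herm. Qed.

Lemma psd_minor (I : finType) (A : op C I) p q : psd A ->
  A p q * (A p q)^* <= A p p * A q q.
Proof. by move=> h; rewrite -!Bf_dv; apply: psd_CS. Qed.

Lemma psd_tr0 (I : finType) (A : op C I) p q : psd A -> trace A = 0 -> A p q = 0.
Proof.
move=> h t0.
have d0 : forall r, A r r = 0.
  by move=> r; apply: (psumr_eq0P (P := predT) (F := fun r => A r r)) => // i _; apply: psd_diag.
have := psd_minor p q h; rewrite !d0 mul0r => h1.
have h2 := mul_conjC_ge0 (A p q).
by apply/eqP; rewrite -mul_conjC_eq0 eq_le h1 h2.
Qed.

Lemma psd_hs (I : finType) (A : op C I) : psd A ->
  \sum_p \sum_q A p q * (A p q)^* <= trace A * trace A.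
Proof.
move=> h; rewrite /trace mulr_suml; apply: ler_sum => p _.
rewrite mulr_sumr; apply: ler_sum => q _; exact: psd_minor.
Qed.

Lemma trace_ge0 (I : finType) (A : op C I) : psd A -> 0 <= trace A.
Proof. by move=> h; apply: sumr_ge0 => p _; apply: psd_diag. Qed.

Lemma wCS (J : finType) (P : pred J) (t al : J -> C) :
  (forall j, P j -> 0 <= t j) -> (forall j, P j -> t j = 0 -> al j = 0) ->
  \sum_(j | P j) t j != 0 ->
  (\sum_(j | P j) al j) * (\sum_(j | P j) al j)^* / \sum_(j | P j) t j
   <= \sum_(j | P j && (t j != 0)) al j * (al j)^* / t j.
Proof.
move=> tge0 t0 T0.
set S := \sum_(j | P j) al j; set T := \sum_(j | P j) t j in T0 *.
set X := \sum_(j | _) _.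
have hT : T^* = T by apply: real_of_ge0; apply: sumr_ge0.
set be := S / T.
have hS : \sum_(j | P j && (t j != 0)) al j = S.
  rewrite big_mkcondr; apply: eq_bigr => j Pj; case: eqP => // /(t0 _ Pj) ->; done.
have hTT : \sum_(j | P j && (t j != 0)) t j = T.
  rewrite big_mkcondr; apply: eq_bigr => j Pj; case: eqP => // ->; done.
have key : 0 <= \sum_(j | P j && (t j != 0)) (al j - t j * be) * (al j - t j * be)^* / t j.
  apply: sumr_ge0 => j /andP [Pj tj]; apply: divr_ge0; [exact: mul_conjC_ge0 | exact: tge0].
rewrite (eq_bigr (fun j => al j * (al j)^* / t j - (al j * be^* + be * (al j)^*) + t j * (be * be^*))) in key; last first.
  move=> j /andP [Pj tj].
  have ht : (t j)^* = t j by apply: real_of_ge0; apply: tge0.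
  rewrite rmorphB rmorphM /= ht; field; done.
rewrite big_split /= sumrB big_split /= -mulr_suml -mulr_sumr -mulr_suml -rmorph_sum /= hS hTT -/X in key.
rewrite -subr_ge0; move: key; congr (_ <= _).
rewrite /be rmorphM /= fmorphV /= hT; field; done.
Qed.

Lemma lin0 (I J : finType) (L : op C I -> op C J) : linear_map L ->
  L (fun _ _ => 0) = (fun _ _ => 0).
Proof.
move=> hL; have := hL (-1) (fun _ _ => 0) (fun _ _ => 0).
have -> : (fun p q : I => -1 * (fun _ _ => 0 : C) p q + (fun _ _ => 0 : C) p q) = (fun _ _ => 0).
  by do 2 (apply: functional_extensionality => ?); rewrite mulr0 addr0.
move=> ->; do 2 (apply: functional_extensionality => ?).
by rewrite mulN1r addNr.
Qed.

Lemma lin_sum_seq (I J K : finType) (L : op C I -> op C J) (r : seq K) (c : K -> C)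
  (f : K -> op C I) : linear_map L ->
  L (fun p q => \sum_(k <- r) c k * f k p q) = (fun x y => \sum_(k <- r) c k * L (f k) x y).
Proof.
move=> hL; elim: r => [|a r IH].
  have -> : (fun p q : I => \sum_(k <- [::]) c k * f k p q) = (fun _ _ => 0).
    by do 2 (apply: functional_extensionality => ?); rewrite big_nil.
  rewrite lin0 //; do 2 (apply: functional_extensionality => ?); by rewrite big_nil.
have -> : (fun p q : I => \sum_(k <- a :: r) c k * f k p q) =
   (fun p q => c a * f a p q + (fun p q => \sum_(k <- r) c k * f k p q) p q).
  by do 2 (apply: functional_extensionality => ?); rewrite big_cons.
rewrite hL IH; do 2 (apply: functional_extensionality => ?); by rewrite big_cons.
Qed.

Lemma lin_sum (I J K : finType) (L : op C I -> op C J) (c : K -> C)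
  (f : K -> op C I) : linear_map L ->
  L (fun p q => \sum_k c k * f k p q) = (fun x y => \sum_k c k * L (f k) x y).
Proof. exact: lin_sum_seq. Qed.

Lemma op_expand (I : finType) (X : op C I) :
  X = (fun a b => \sum_(pq : I * I) X pq.1 pq.2 * unit_op C pq.1 pq.2 a b).
Proof.
apply: functional_extensionality => a; apply: functional_extensionality => b.
rewrite -(pair_big predT predT (fun p q => X p q * unit_op C p q a b)) /=.
rewrite /unit_op.
rewrite -[LHS](sum_dl a (fun p => X p b)); apply: eq_bigr => p _.
rewrite -[LHS](sum_dl b (fun q => (p == a)%:R * X p q)); apply: eq_bigr => q _.
by rewrite (eq_sym a) (eq_sym b) -mulnb natrM; ring.
Qed.

Lemma lin_expand (I J : finType) (L : op C I -> op C J) (X : op C I) x y :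
  linear_map L ->
  L X x y = \sum_p \sum_q X p q * L (unit_op C p q) x y.
Proof.
move=> hL; rewrite {1}(op_expand X) (lin_sum _ (fun pq => unit_op C pq.1 pq.2)) //.
by rewrite (pair_big predT predT (fun p q => X p q * L (unit_op C p q) x y)).
Qed.

Lemma sum_I1 (J : finType) (g : 'I_1 * J -> C) : \sum_(x : 'I_1 * J) g x = \sum_j g (ord0, j).
Proof.
transitivity (\sum_(p : 'I_1 * J | predT p.1 && predT p.2) g (p.1, p.2)).
  by apply: eq_bigr => [[a j]].
by rewrite -(pair_big predT predT (fun a j => g (a, j))) big_ord1.
Qed.

Lemma rank1_psd (I : finType) (v : I -> C) : psd (fun p q => v p * (v q)^*).
Proof.
move=> u.
have -> : \sum_p \sum_q (u p)^* * (v p * (v q)^*) * u q =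
  (\sum_p (u p)^* * v p) * (\sum_q (u q)^* * v q)^*.
  rewrite rmorph_sum mulr_suml; apply: eq_bigr => p _.
  rewrite mulr_sumr; apply: eq_bigr => q _; rewrite rmorphM /= conjCK; ring.
exact: mul_conjC_ge0.
Qed.

Lemma cp_pos (I J : finType) (L : op C I -> op C J) (v : I -> C) (w : J -> C) :
  completely_positive L -> 0 <= Bf (L (fun p q => v p * (v q)^*)) w w.
Proof.
move=> hL.
have h := hL 1%N (fun x y => v x.2 * (v y.2)^*) (rank1_psd (fun x : 'I_1 * I => v x.2)).
have := h (fun z => w z.2); congr (_ <= _).
rewrite sum_I1 /Bf; apply: eq_bigr => x _; rewrite sum_I1 //.
Qed.

Lemma sum4_swap (A B D E : finType) (f : A -> B -> D -> E -> C) :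
  \sum_a \sum_b \sum_c \sum_e f a b c e = \sum_c \sum_e \sum_a \sum_b f a b c e.
Proof.
rewrite (eq_bigr (fun a => \sum_c \sum_b \sum_e f a b c e)); last by move=> a _; rewrite exchange_big.
rewrite exchange_big; apply: eq_bigr => c _.
rewrite (eq_bigr (fun a => \sum_e \sum_b f a b c e)); last by move=> a _; rewrite exchange_big.
by rewrite exchange_big.
Qed.

Lemma adj_psd (I J : finType) (L : op C I -> op C J) (w : J -> C) :
  linear_map L -> completely_positive L -> psd (adjoint L (fun x y => w x * (w y)^*)).
Proof.
move=> hl hc v.
have h := cp_pos v w hc; rewrite -conjC_ge0 in h.
move: h; congr (_ <= _).
rewrite /Bf rmorph_sum /=.
rewrite (eq_bigr (fun x => \sum_y \sum_p \sum_q (v p)^* * ((L (unit_op C p q) x y)^* * (w x * (w y)^*)) * v q)); last first.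
  move=> x _; rewrite rmorph_sum; apply: eq_bigr => y _ /=.
  rewrite (lin_expand _ _ _ hl) !rmorphM /= rmorph_sum mulr_sumr mulr_suml; apply: eq_bigr => p _.
  rewrite rmorph_sum mulr_sumr mulr_suml; apply: eq_bigr => q _.
  rewrite !rmorphM /= !conjCK; ring.
rewrite sum4_swap; apply: eq_bigr => p _; apply: eq_bigr => q _.
rewrite /adjoint /hs mulr_sumr mulr_suml; apply: eq_bigr => x _.
by rewrite mulr_sumr mulr_suml; apply: eq_bigr => y _.
Qed.
End Gen.


Section Spec.
Variable C : numClosedFieldType.

Lemma colON d (e : 'I_d -> 'I_d -> C) : orthonormal_basis e ->
  forall p q, \sum_i e i p * (e i q)^* = (p == q)%:R.
Proof.
move=> he p q.
pose A : 'M[C]_d := \matrix_(i, p) (e i p)^*.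
pose B : 'M[C]_d := \matrix_(p, i) e i p.
have AB : A *m B = 1%:M.
  apply/matrixP => i j; rewrite !mxE -he; apply: eq_bigr => r _; by rewrite !mxE.
have := mulmx1C AB => /matrixP /(_ p q); rewrite !mxE => <-.
by apply: eq_bigr => r _; rewrite !mxE.
Qed.

Lemma prod_ind d N (x y : {ffun 'I_N -> 'I_d}) :
  \prod_k ((x k == y k)%:R : C) = (x == y)%:R.
Proof.
case: eqP => [-> | ne]; first by rewrite big1 // => k _; rewrite eqxx.
have [k hk] : exists k, x k != y k.
  apply/existsP; apply: contraT; rewrite negb_exists => /forallP h.
  by case: ne; apply/ffunP => k; move: (h k); rewrite negbK => /eqP.
by rewrite (bigD1 k) //= (negPf hk) mul0r.
Qed.

Lemma prod_ind_but d N (k : 'I_N) (x y : {ffun 'I_N -> 'I_d}) :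
  \prod_(l | l != k) ((x l == y l)%:R : C) = [forall l, (l != k) ==> (x l == y l)]%:R.
Proof.
case: forallP => [h | ne]; first by rewrite big1 // => l lk; move/implyP: (h l) => /(_ lk) /eqP ->; rewrite eqxx.
have [l hl] : exists l, ~~ ((l != k) ==> (x l == y l)).
  apply/existsP; apply: contraT; rewrite negb_exists => /forallP h.
  by case: ne => l; move: (h l); rewrite negbK.
move: hl; rewrite negb_imply => /andP [lk hl].
by rewrite (bigD1 l) //= (negPf hl) mul0r.
Qed.

Definition wv d N (e : 'I_N -> 'I_d -> 'I_d -> C) (j x : {ffun 'I_N -> 'I_d}) : C :=
  \prod_k e k (j k) (x k).

Lemma Ysplit d N (e : 'I_N -> 'I_d -> 'I_d -> C) j x y :
  wv e j x * (wv e j y)^* = \prod_k (e k (j k) (x k) * (e k (j k) (y k))^*).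
Proof. by rewrite /wv rmorph_prod -big_split. Qed.

Lemma complete d N (e : 'I_N -> 'I_d -> 'I_d -> C) :
  (forall k, orthonormal_basis (e k)) ->
  forall x y, \sum_j wv e j x * (wv e j y)^* = (x == y)%:R.
Proof.
move=> he x y.
rewrite (eq_bigr (fun j : {ffun 'I_N -> 'I_d} => \prod_k (e k (j k) (x k) * (e k (j k) (y k))^*))); last by move=> j _; rewrite Ysplit.
rewrite -(bigA_distr_bigA (fun k a => e k a (x k) * (e k a (y k))^*)) /=.
rewrite -prod_ind; apply: eq_bigr => k _; exact: colON.
Qed.

Lemma margY d N (e : 'I_N -> 'I_d -> 'I_d -> C) :
  (forall k, orthonormal_basis (e k)) ->
  forall k i x y, \sum_(j : {ffun 'I_N -> 'I_d} | j k == i) wv e j x * (wv e j y)^* =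
     e k i (x k) * (e k i (y k))^* * [forall l, (l != k) ==> (x l == y l)]%:R.
Proof.
move=> he k i x y.
pose F l a := e l a (x l) * (e l a (y l))^*.
pose F' l a := if l == k then (a == i)%:R * F l a else F l a.
transitivity (\sum_(j : {ffun 'I_N -> 'I_d}) \prod_l F' l (j l)).
  rewrite big_mkcond; apply: eq_bigr => j _; rewrite Ysplit.
  rewrite (bigD1 k) //= [RHS](bigD1 k) //= /F' eqxx.
  rewrite [in RHS](eq_bigr (fun l => F l (j l))); last by move=> l /negPf ->.
  by case: (j k == i); rewrite ?mul1r ?mul0r.
rewrite -(bigA_distr_bigA F') /= (bigD1 k) //= /F' eqxx.
rewrite (sum_dl i (F k)) -prod_ind_but; congr (_ * _).
apply: eq_bigr => l /negPf ->; exact: colON.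
Qed.
End Spec.


Section Main.
Variable C : numClosedFieldType.

Lemma Bf_vec_outer d (X : op C 'I_d) (v : 'I_d * 'I_d -> C) :
  Bf (fun x y => vec_outer X x y) v v =
  (\sum_x (v x)^* * X x.1 x.2) * (\sum_x (v x)^* * X x.1 x.2)^*.
Proof.
rewrite /Bf /vec_outer rmorph_sum mulr_suml; apply: eq_bigr => x _.
rewrite mulr_sumr; apply: eq_bigr => y _; rewrite rmorphM /= conjCK; ring.
Qed.

Lemma Bf_sumdiv (I K : finType) (P : pred K) (f : K -> op C I) (c : K -> C) u w :
  Bf (fun x y => \sum_(j | P j) f j x y / c j) u w = \sum_(j | P j) Bf (f j) u w / c j.
Proof.
rewrite /Bf (eq_bigr (fun x => \sum_(j | P j) \sum_y (u x)^* * f j x y * w y / c j)).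
  rewrite exchange_big; apply: eq_bigr => j _; rewrite mulr_suml; apply: eq_bigr => x _.
  by rewrite mulr_suml.
move=> x _; rewrite exchange_big; apply: eq_bigr => y _.
by rewrite mulr_sumr mulr_suml; apply: eq_bigr => j _; ring.
Qed.

Lemma Bf_sub (I : finType) (A B : op C I) u w :
  Bf (fun x y => A x y - B x y) u w = Bf A u w - Bf B u w.
Proof.
rewrite /Bf -sumrB; apply: eq_bigr => x _; rewrite -sumrB; apply: eq_bigr => y _; ring.
Qed.

Lemma part_sumP (K J : finType) (P : pred K) (f : K -> J) (g : K -> C) :
  \sum_a \sum_(x | (f x == a) && P x) g x = \sum_(x | P x) g x.
Proof.
rewrite [RHS](partition_big f predT) //; apply: eq_bigr => a _.
by apply: eq_bigl => x; rewrite andbC.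
Qed.

Lemma part_sum (K J : finType) (f : K -> J) (g : K -> C) :
  \sum_a \sum_(x | f x == a) g x = \sum_x g x.
Proof.
rewrite -(part_sumP predT f g); apply: eq_bigr => a _.
by apply: eq_bigl => x; rewrite andbT.
Qed.

Theorem main (d N : nat) (hd : (0 < d)%N)
  (Phi : 'I_N -> op C 'I_d -> op C 'I_d)
  (hPhi : forall k : 'I_N, channel (Phi k))
  (e : 'I_N -> 'I_d -> 'I_d -> C)
  (he : forall k : 'I_N, orthonormal_basis (e k))
  (hSDP : forall H : op C ('I_d * 'I_d)%type,
      hermitian_op H ->
      (forall k : 'I_N, op_ge H (G_op (Phi k) (e k))) ->
      (d%:R : C) < trace H) :
  ~ compatible Phi.
Proof.
move=> [L [[hl hcp htp] hmarg]].
pose M (j : {ffun 'I_N -> 'I_d}) : op C 'I_d := adjoint L (fun x y => wv e j x * (wv e j y)^*).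
pose t j := trace (M j).
have psdM j : psd (M j) by apply: adj_psd.
have tge0 j : 0 <= t j by apply: trace_ge0.
have treal j : (t j)^* = t j by apply: real_of_ge0.
have M0 j : t j = 0 -> forall p q, M j p q = 0 by move=> h p q; apply: psd_tr0.
have sum_t : \sum_j t j = d%:R.
  rewrite /t /trace exchange_big /=.
  rewrite (eq_bigr (fun _ => 1)); first by rewrite sumr_const card_ord.
  move=> p _; rewrite /M /adjoint /hs.
  rewrite exchange_big /= (eq_bigr (fun x => (L (unit_op C p p) x x)^*)).
    rewrite -rmorph_sum /=; change (\sum_x L (unit_op C p p) x x) with (trace (L (unit_op C p p))).
    by rewrite htp /trace /unit_op (bigD1 p) //= eqxx big1 ?addr0 ?rmorph1 // => r /negPf ->.
  move=> x _; rewrite exchange_big /=.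
  rewrite (eq_bigr (fun y => (L (unit_op C p p) x y)^* * (x == y)%:R)).
    by rewrite -[RHS](sum_dr x (fun y => (L (unit_op C p p) x y)^*)); apply: eq_bigr => y _; rewrite eq_sym.
  by move=> y _; rewrite -(complete he x y) mulr_sumr.
have marg k i p q : adjoint (Phi k) (proj_op (e k i)) p q = \sum_(j : {ffun 'I_N -> 'I_d} | j k == i) M j p q.
  rewrite /adjoint -hmarg /hs /ptrace_keep /M /adjoint /hs.
  set Z := L (unit_op C p q).
  rewrite [RHS]exchange_big /=.
  rewrite [RHS](eq_bigr (fun x => \sum_y (Z x y)^* * (e k i (x k) * (e k i (y k))^* *
        [forall l, (l != k) ==> (x l == y l)]%:R))); last first.
    move=> x _; rewrite exchange_big /=; apply: eq_bigr => y _.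
    by rewrite -(margY he) mulr_sumr.
  rewrite -(part_sum (fun x : {ffun 'I_N -> 'I_d} => x k)).
  apply: eq_bigr => a _.
  rewrite (eq_bigr (fun b => \sum_(x : {ffun 'I_N -> 'I_d} | x k == a) \sum_(y : {ffun 'I_N -> 'I_d} | (y k == b) && [forall l, (l != k) ==> (x l == y l)]) (Z x y)^* * (e k i (x k) * (e k i (y k))^*))); last first.
    move=> b _; rewrite !rmorph_sum mulr_suml /=; apply: eq_bigr => x /eqP xa.
    rewrite rmorph_sum mulr_suml /=; apply: eq_bigr => y /andP [/eqP yb _].
    by rewrite /proj_op xa yb.
  rewrite exchange_big /=; apply: eq_bigr => x _.
  rewrite (part_sumP (fun y : {ffun 'I_N -> 'I_d} => [forall l, (l != k) ==> (x l == y l)]) (fun y : {ffun 'I_N -> 'I_d} => y k)).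
  rewrite big_mkcond /=; apply: eq_bigr => y _.
  by case: ifP => _; rewrite ?mulr1 ?mulr0.
have margt k i : trace (adjoint (Phi k) (proj_op (e k i))) = \sum_(j : {ffun 'I_N -> 'I_d} | j k == i) t j.
  by rewrite /trace (eq_bigr _ (fun p _ => marg k i p p)) exchange_big.
pose H : op C ('I_d * 'I_d)%type := fun x y => \sum_(j | t j != 0) vec_outer (M j) x y / t j.
have hH : hermitian_op H.
  move=> x y; rewrite /H rmorph_sum; apply: eq_bigr => j _.
  rewrite /vec_outer !rmorphM /= fmorphV /= treal conjCK; ring.
have htr : trace H <= d%:R.
  rewrite /trace /H exchange_big /=.
  apply: (@le_trans _ _ (\sum_(j | t j != 0) t j)).
    apply: ler_sum => j tj.
    rewrite -mulr_suml /vec_outer.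
    rewrite -(pair_bigA _ (fun p q => M j p q * (M j p q)^*)) /=.
    apply: (@le_trans _ _ (t j * t j / t j)).
      by apply: ler_wpM2r; [rewrite invr_ge0 | apply: psd_hs].
    by rewrite mulfK.
  rewrite -sum_t [leRHS](bigID (fun j => t j != 0)) /= lerDl.
  by apply: sumr_ge0 => j _; apply: tge0.
have hge k : op_ge H (G_op (Phi k) (e k)).
  move=> v.
  change (0 <= Bf (fun x y => H x y - G_op (Phi k) (e k) x y) v v).
  rewrite Bf_sub subr_ge0 /H /G_op !Bf_sumdiv.
  under eq_bigr do rewrite Bf_vec_outer.
  under [X in _ <= X]eq_bigr do rewrite Bf_vec_outer.
  pose al (X : op C 'I_d) := \sum_x (v x)^* * X x.1 x.2.
  have eal i : \sum_x (v x)^* * adjoint (Phi k) (proj_op (e k i)) x.1 x.2 =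
      \sum_(j : {ffun 'I_N -> 'I_d} | j k == i) al (M j).
    rewrite /al (eq_bigr (fun x => \sum_(j : {ffun 'I_N -> 'I_d} | j k == i) (v x)^* * M j x.1 x.2)).
      by rewrite exchange_big.
    by move=> x _; rewrite marg mulr_sumr.
  rewrite [X in _ <= X](partition_big (fun j : {ffun 'I_N -> 'I_d} => j k) predT) //=.
  rewrite big_mkcond; apply: ler_sum => i _.
  case: ifP => hT.
    rewrite eal margt; move: hT; rewrite margt => hT.
    apply: le_trans (wCS (P := fun j : {ffun 'I_N -> 'I_d} => j k == i) (t := t)
        (al := fun j => al (M j)) _ _ hT) _.
    - by move=> j _; apply: tge0.
    - by move=> j _ /M0 h0; rewrite /al big1 // => x _; rewrite h0 mulr0.
    rewrite le_eqVlt; apply/orP; left; apply/eqP; apply: eq_bigl => j; by rewrite andbC.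
  apply: sumr_ge0 => j _; apply: divr_ge0; [exact: mul_conjC_ge0 | exact: tge0].
have := hSDP H hH hge.
by move/lt_le_trans => /(_ _ htr); rewrite ltxx.
Qed.
End Main.

Unset Implicit Arguments.
Local Open Scope complex_scope.

Theorem theorem4p7 (R : realType) (d N : nat) (hd : (0 < d)%N)
  (Phi : 'I_N -> op R[i] 'I_d -> op R[i] 'I_d)
  (hPhi : forall k : 'I_N, channel (Phi k))
  (e : 'I_N -> 'I_d -> 'I_d -> R[i])
  (he : forall k : 'I_N, orthonormal_basis (e k))
  (hSDP : forall H : op R[i] ('I_d * 'I_d)%type,
      hermitian_op H ->
      (forall k : 'I_N, op_ge H (G_op (Phi k) (e k))) ->
      (d%:R : R[i]) < trace H) :
  ~ compatible Phi.
Proof.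
exact: (@main (R[i]) d N hd Phi hPhi e he hSDP).
Qed.
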